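(* Let $\mathbb{F}_q$ be a finite field with $\mathrm{char}(\mathbb{F}_q)>3$ and $3\mid q-1$, let $x$ be a generator of $\mathbb{F}_q^\times$, and let $C=\langle x^3\rangle$ be the subgroup of cubes in $\mathbb{F}_q^\times$. For nonzero $a,b,c,d\in\mathbb{F}_q$, if $a^{-1}c$ and $b^{-1}d$ lie in the same coset of $C$ in $\mathbb{F}_q^\times$, then $J_3(a,b)$ is conjugate to $J_3(c,d)$.
   Context: $\mathfrak{sl}_3(\mathbb{F}_q)$ is the Lie algebra of $3\times3$ traceless matrices over $\mathbb{F}_q$. Fix a primitive cube root of unity $u\in\mathbb{F}_q$. For nonzero $a,b\in\mathbb{F}_q$, $J_3(a,b)$ denotes the decomposition $\mathfrak{sl}_3(\mathbb{F}_q)=H_0\oplus H_1\oplus H_2\oplus H_3$, where $H_0$ is the subalgebra of traceless diagonal matrices and, for $j=1,2,3$ with $(\lambda_j,\mu_j)=(1,1),(u,u^2),(u^2,u)$ respectively, $H_j=\left\langle \begin{pmatrix}0&1&0\\0&0&\lambda_j a\\ \mu_j ab&0&0\end{pmatrix},\begin{pmatrix}0&0&1\\ \mu_j ab&0&0\\0&\lambda_j b&0\end{pmatrix}\right\rangle_{\mathbb{F}_q}$. (Such a decomposition is called a $J_3$-decomposition.) Two such decompositions are conjugate if there is a Lie algebra automorphism of $\mathfrak{sl}_3(\mathbb{F}_q)$ mapping each component of the first onto exactly one component of the second. *)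

(* Defs.v *)
From HB Require Import structures.
From mathcomp Require Import all_boot all_order all_algebra all_fingroup all_field.
Set Implicit Arguments. Unset Strict Implicit. Unset Printing Implicit Defensive.
Import GRing.Theory.
Local Open Scope ring_scope.

Section Defs.
Variable F : finFieldType.

Definition mx3 (r0 r1 r2 : F * F * F) : 'M[F]_3 :=
  \matrix_(i < 3, j < 3)
     let r := match val i with 0%N => r0 | 1%N => r1 | _ => r2 end in
     match val j with 0%N => r.1.1 | 1%N => r.1.2 | _ => r.2 end.

Definition sl3 : {set 'M[F]_3} := [set X | \tr X == 0].

Definition lie_bracket (X Y : 'M[F]_3) : 'M[F]_3 := X *m Y - Y *m X.

(* F-linear bijection of sl_3(F) onto itself preserving the Lie bracket;
   f is given as a map on all 3x3 matrices, only its restriction to sl3 matters *)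
Definition lie_automorphism_sl3 (f : 'M[F]_3 -> 'M[F]_3) : Prop :=
  [/\ (forall X, X \in sl3 -> f X \in sl3),
      (forall (s : F) X Y, X \in sl3 -> Y \in sl3 -> f (s *: X + Y) = s *: f X + f Y),
      (forall X Y, X \in sl3 -> Y \in sl3 -> f (lie_bracket X Y) = lie_bracket (f X) (f Y)),
      {in sl3 &, injective f} &
      (forall Y, Y \in sl3 -> exists2 X, X \in sl3 & f X = Y)].

Definition span2 (A B : 'M[F]_3) : {set 'M[F]_3} :=
  [set s *: A + t *: B | s : F, t : F].

Definition H0 : {set 'M[F]_3} := [set X | is_diag_mx X && (\tr X == 0)].

Definition Hj (a b lam mu : F) : {set 'M[F]_3} :=
  span2 (mx3 (0, 1, 0) (0, 0, lam * a) (mu * a * b, 0, 0))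
        (mx3 (0, 0, 1) (mu * a * b, 0, 0) (0, lam * b, 0)).

(* the J_3(a,b) decomposition, components indexed by 'I_4 (H_0,...,H_3),
   relative to the fixed primitive cube root of unity u *)
Definition J3 (u a b : F) (i : 'I_4) : {set 'M[F]_3} :=
  match val i with
  | 0%N => H0
  | 1%N => Hj a b 1 1
  | 2%N => Hj a b u (u ^+ 2)
  | _ => Hj a b (u ^+ 2) u
  end.

Definition conjugate_decomp (H K : 'I_4 -> {set 'M[F]_3}) : Prop :=
  exists f, lie_automorphism_sl3 f /\ forall i, exists j, f @: H i = K j.

Definition same_coset_cubes (x y z : F) : Prop :=
  exists k : nat, y = z * x ^+ (3 * k).
End Defs.

(* Main.v *)
Require Import Defs.
From HB Require Import structures.
From mathcomp Require Import all_boot all_order all_algebra all_fingroup all_field.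
From mathcomp Require Import ring.
Import GRing.Theory.
Local Open Scope ring_scope.
Set Implicit Arguments. Unset Strict Implicit.

Lemma conj_auto (F : finFieldType) (P Q : 'M[F]_3) :
  Q *m P = 1%:M -> P *m Q = 1%:M -> lie_automorphism_sl3 (fun X => P *m X *m Q).
Proof.
move=> QP PQ; split.
- move=> X; rewrite !inE => /eqP tX; apply/eqP.
  by rewrite mxtrace_mulC mulmxA QP mul1mx.
- move=> s X Y _ _; by rewrite mulmxDr mulmxDl -scalemxAr -scalemxAl.
- move=> X Y _ _; rewrite /lie_bracket.
  have E : forall A B, P *m A *m Q *m (P *m B *m Q) = P *m (A *m B) *m Q.
    move=> A B; by rewrite !mulmxA -(mulmxA (P *m A) Q P) QP mulmx1.
  by rewrite !E mulmxBr mulmxBl.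
- move=> X Y _ _ H; have := congr1 (fun M => Q *m M *m P) H.
  by rewrite /= !mulmxA QP !mul1mx -!mulmxA QP !mulmx1.
- move=> Y; rewrite inE => /eqP tY; exists (Q *m Y *m P).
    rewrite inE; apply/eqP; by rewrite mxtrace_mulC mulmxA PQ mul1mx.
  by rewrite !mulmxA PQ !mul1mx -!mulmxA PQ !mulmx1.
Qed.

Lemma span_img (F : finFieldType) (f : 'M[F]_3 -> 'M[F]_3) A B A' B' (al be : F) :
  (forall s t, f (s *: A + t *: B) = s *: f A + t *: f B) ->
  al != 0 -> be != 0 -> f A = al *: A' -> f B = be *: B' ->
  f @: span2 A B = span2 A' B'.
Proof.
move=> fl hal hbe fA fB; apply/setP => Y; apply/imsetP/imset2P.
- case=> X /imset2P [s t _ _ ->] ->; exists (s * al) (t * be); rewrite ?inE //.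
  by rewrite fl fA fB !scalerA.
- case=> s t _ _ ->; exists (s / al *: A + t / be *: B).
    by apply/imset2P; exists (s / al) (t / be); rewrite ?inE.
  by rewrite fl fA fB !scalerA !divfK.
Qed.

Definition r3 (F : finFieldType) (x0 x1 x2 : F) : 'rV[F]_3 :=
  \row_(i < 3) nth 0 [:: x0; x1; x2] i.

Lemma diag_inv (F : finFieldType) (v w : 'rV[F]_3) :
  (forall i, v 0 i * w 0 i = 1) ->
  diag_mx w *m diag_mx v = 1%:M /\ diag_mx v *m diag_mx w = 1%:M.
Proof.
move=> H; split; rewrite mul_diag_mx; apply/matrixP => i j; rewrite !mxE;
  by case: eqP => [->|]; rewrite ?mulr0n ?mulr1n ?mulr0 // ?H // mulrC H.
Qed.

Lemma fE (F : finFieldType) (v w : 'rV[F]_3) X :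
  diag_mx v *m X *m diag_mx w = \matrix_(i, j) (v 0 i * X i j * w 0 j).
Proof. by rewrite mul_diag_mx mul_mx_diag; apply/matrixP => i j; rewrite !mxE. Qed.

Unset Implicit Arguments.
Theorem lemma3p9 (F : finFieldType) (u x a b c d : F)
  (hchar : forall p : nat, p \in [pchar F] -> (3 < p)%N)
  (h3 : (3 %| #|F|.-1)%N)
  (hu : 3.-primitive_root u)
  (hx : #|F|.-1.-primitive_root x)
  (ha : a != 0) (hb : b != 0) (hc : c != 0) (hd : d != 0)
  (hcoset : same_coset_cubes x (a^-1 * c) (b^-1 * d)) :
  conjugate_decomp (J3 u a b) (J3 u c d).
Proof.
case: hcoset => k hk.
have hm : x ^+ k != 0.
  apply/eqP => m0; move: hk; rewrite mulnC exprM m0 expr0n /= mulr0.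
  by move/eqP; rewrite mulf_eq0 invr_eq0 (negbTE ha) (negbTE hc).
move: hk; rewrite mulnC exprM; set m := x ^+ k => hk.
have hc' : c = a * d * m ^+ 3 / b.
  have -> : c = a * (a^-1 * c) by rewrite mulrA divff // mul1r.
  rewrite hk; field; exact: hb.
clear hk; subst c.
set t := b / (d * m ^+ 2).
have hm2 : m ^+ 2 != 0 by rewrite expf_neq0.
have hm3 : m ^+ 3 != 0 by rewrite expf_neq0.
have ht : t != 0 by rewrite /t mulf_neq0 ?invr_eq0 ?mulf_neq0.
set c := a * d * m ^+ 3 / b.
have hc0 : c != 0 by rewrite /c mulf_neq0 ?invr_eq0 ?mulf_neq0.
set d0 := t ^+ 2 * c / a.
set d1 := t * c / a.
have ht2 : t ^+ 2 != 0 by rewrite expf_neq0.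
have hd0 : d0 != 0.
  apply: mulf_neq0; [exact: mulf_neq0 | by rewrite invr_eq0].
have hd1 : d1 != 0.
  apply: mulf_neq0; [exact: mulf_neq0 | by rewrite invr_eq0].
set v := r3 d0 d1 1.
set w := r3 d0^-1 d1^-1 1.
have vw : forall i, v 0 i * w 0 i = 1.
  by move=> i; rewrite !mxE; case: i => [[|[|[|i]]] Hi] //=; rewrite ?divff // mul1r.
have [WV VW] := diag_inv vw.
exists (fun X => diag_mx v *m X *m diag_mx w); split; first exact: conj_auto.
have lin : forall (A B : 'M[F]_3) s t, diag_mx v *m (s *: A + t *: B) *m diag_mx w =
   s *: (diag_mx v *m A *m diag_mx w) + t *: (diag_mx v *m B *m diag_mx w).
  move=> A B s t'; by rewrite mulmxDr mulmxDl -!scalemxAr -!scalemxAl.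
have HJ : forall lam mu : F,
   [set diag_mx v *m X *m diag_mx w | X in Hj a b lam mu] = Hj c d lam mu.
  move=> lam mu; apply: (span_img (al := t) (be := d0) (lin _ _) ht hd0).
  - rewrite fE; apply/matrixP => i j; rewrite !mxE.
    case: i => [[|[|[|i]]] Hi] //=; case: j => [[|[|[|j]]] Hj] //=;
      rewrite /d0 /d1 /c /t; field; rewrite ?hm ?ha ?hb ?hd //.
  - rewrite fE; apply/matrixP => i j; rewrite !mxE.
    case: i => [[|[|[|i]]] Hi] //=; case: j => [[|[|[|j]]] Hj] //=;
      rewrite /d0 /d1 /c /t; field; rewrite ?hm ?ha ?hb ?hd //.
move=> i; exists i; case: i => [[|[|[|i]]] Hi] //; rewrite /J3 /=; try exact: HJ.
rewrite -[RHS]imset_id; apply: eq_in_imset => X; rewrite inE => /andP [/is_diag_mxP dX _].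
rewrite fE; apply/matrixP => i j; rewrite mxE.
case: (eqVneq i j) => [->|nij].
  by rewrite mulrAC vw mul1r.
by rewrite dX ?mulr0 ?mul0r //.
Qed.
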